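(* Let $n\ge2$ be an integer. (i) For every integer $T$ with $1\le T\le\lfloor n/2\rfloor$, there exists a nonempty open subinterval $I=I(T)$ of $(1/n,n)$ such that for all $\lambda\in I$ $$\widehat\lambda_{n,T}(\lambda)>\frac1n \quad\text{and}\quad \lambda_{n,T+2}(\lambda)<\frac1n .$$ (ii) For every integer $T$ with $\lfloor n/2\rfloor<T\le n+1$, we have $\widehat\lambda_{n,T}(\lambda)=\lambda_{n,T+1}(\lambda)<1/n$ for all $\lambda\in(1/n,\infty]$.
   Context: For an integer $n\ge1$ let $f_n(x)=(1+x)^{n+1}/x$ for $x>0$. The function $f_n$ is strictly decreasing on $(0,1/n]$ and strictly increasing on $[1/n,\infty)$. Regular graph exponents (Schmidt–Summerer), defined algebraically. For $\lambda\in[1/n,\infty)$ let $\mu\in(0,1/n]$ be the unique solution of $f_n(\mu)=f_n(\lambda)$, and set $$\lambda_{n,j}(\lambda)=\lambda^{1-\frac{j-1}{n+1}}\mu^{\frac{j-1}{n+1}},\qquad 1\le j\le n+2 .$$ All ratios $\lambda_{n,j}/\lambda_{n,j+1}$ are equal. For $\lambda=\infty$ put $\lambda_{n,1}=\infty$, $\lambda_{n,2}=1$ and $\lambda_{n,j}=0$ for $j\ge3$. Put $\widehat\lambda_{n,j}(\lambda):=\lambda_{n,j+1}(\lambda)$ for $1\le j\le n+1$. These are the exponents $\lambda_{n,j},\widehat\lambda_{n,j}$ of the regular graph in dimension $n$ with parameter $\lambda_n=\lambda$. (In terms of Diophantine approximation: by $\overline\psi_{n,T}<0\iff\widehat\lambda_{n,T}>1/n$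 and $\underline\psi_{n,T+2}>0\iff\lambda_{n,T+2}<1/n$, part (i) gives vectors inducing the regular graph whose $T$-th successive minimum function tends to $-\infty$ and whose $(T+2)$-nd tends to $+\infty$; this is Schmidt's property.) *)

(* Defs.v *)
From Stdlib Require Import Reals Lra Lia ClassicalEpsilon.
Open Scope R_scope.

Definition fn (n : nat) (x : R) : R := (1 + x) ^ (S n) / x.

(* mu(lambda): the (unique) solution mu in (0,1/n] of f_n(mu) = f_n(lambda),
   chosen by Hilbert's epsilon (the context asserts existence/uniqueness
   for lambda >= 1/n). *)
Definition mu_of (n : nat) (lam : R) : R :=
  epsilon (inhabits 0)
    (fun m => 0 < m /\ m <= 1 / INR n /\ fn n m = fn n lam).

(* Parameter lambda in [1/n, infinity]: Some l is the finite value l,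
   None is lambda = infinity. *)
Definition lam_nj (n j : nat) (x : option R) : R :=
  match x with
  | Some l =>
      let e := (INR j - 1) / INR (S n) in
      Rpower l (1 - e) * Rpower (mu_of n l) e
  | None =>
      match j with
      | 0%nat => 0 (* unused index *)
      | 1%nat => 0 (* lambda_{n,1}(infinity) = infinity; never used below *)
      | 2%nat => 1
      | _ => 0
      end
  end.

Definition lamhat_nj (n j : nat) (x : option R) : R := lam_nj n (S j) x.

(* Main.v *)
Require Import Defs.
From Stdlib Require Import Reals Lra Lia Psatz ClassicalEpsilon.
Open Scope R_scope.

Fixpoint geo (r : R) (k : nat) : R :=
  match k with O => 0 | S k => geo r k + r ^ k end.

Lemma geo_S1 r k : geo r (S k) = 1 + r * geo r k.
Proof. induction k. simpl. ring. change (geo r (S (S k))) with (geo r (S k) + r^(S k)).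
rewrite IHk at 1. simpl. ring. Qed.

Lemma geo_SS r m : geo r (S (S m)) = 1 + r * geo r m + r ^ (S m).
Proof. rewrite geo_S1. change (geo r (S m)) with (geo r m + r^m). simpl. ring. Qed.

Lemma geo_nonneg r k : 0 <= r -> 0 <= geo r k.
Proof. intro. induction k; simpl. lra. pose proof (pow_le r k H). lra. Qed.

Lemma geo_ge1 r k : 0 <= r -> (1 <= k)%nat -> 1 <= geo r k.
Proof. intros Hr Hk. destruct k. lia. rewrite geo_S1. pose proof (geo_nonneg r k Hr). nra. Qed.

Lemma geo_ge_1r r k : 0 <= r -> (2 <= k)%nat -> 1 + r <= geo r k.
Proof. intros Hr Hk. destruct k as [|[|k]]; try lia. rewrite geo_S1.
 pose proof (geo_ge1 r (S k) Hr ltac:(lia)). nra. Qed.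

Lemma geo_mono_r r1 r2 k : 0 <= r1 <= r2 -> geo r1 k <= geo r2 k.
Proof. intro. induction k; simpl. lra. pose proof (pow_incr r1 r2 k H). lra. Qed.

Lemma pow_le1 r k : 0 <= r <= 1 -> r ^ k <= 1.
Proof. intro. induction k; simpl. lra. pose proof (pow_le r k ltac:(lra)). nra. Qed.

Lemma pow_anti r a b : 0 <= r <= 1 -> (a <= b)%nat -> r ^ b <= r ^ a.
Proof. intros H Hab. replace b with (a + (b - a))%nat by lia. rewrite pow_add.
 pose proof (pow_le1 r (b-a) H). pose proof (pow_le r a ltac:(lra)). nra. Qed.

Lemma geo_le_n r k : 0 <= r <= 1 -> geo r k <= INR k.
Proof. intro. induction k. simpl; lra. rewrite S_INR. simpl. pose proof (pow_le1 r k H). lra. Qed.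

Lemma geo_lt_n r k : 0 <= r < 1 -> (2 <= k)%nat -> geo r k < INR k.
Proof. intros H Hk. destruct k as [|[|k]]; try lia.
 change (geo r (S (S k))) with (geo r (S k) + r^(S k)). rewrite (S_INR (S k)).
 pose proof (geo_le_n r (S k) ltac:(lra)).
 assert (r ^ S k < 1). { simpl. pose proof (pow_le1 r k ltac:(lra)). nra. } lra. Qed.

Lemma geo_ge_pow r k : 0 <= r <= 1 -> INR k * r ^ k <= geo r k.
Proof. intro. induction k. simpl; lra. rewrite S_INR. simpl.
 pose proof (pow_le r k ltac:(lra)). pose proof (pos_INR k).
 assert (0 <= INR k * r^k) by (apply Rmult_le_pos; lra).
 assert (INR k * r^k * r <= INR k * r^k) by nra. nra. Qed.

Lemma geo_tel r k : (1 - r) * geo r k = 1 - r ^ k.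
Proof. induction k; simpl. ring. rewrite Rmult_plus_distr_l, IHk. ring. Qed.

Lemma cont_pow k : continuity (fun r => r ^ k).
Proof. apply derivable_continuous, derivable_pow. Qed.

Lemma geo_cont k : continuity (fun r => geo r k).
Proof. induction k; simpl.
 - apply continuity_const. intros x y. reflexivity.
 - apply (continuity_plus (fun r => geo r k) (fun r => r ^ k)); auto. apply cont_pow. Qed.

Lemma pos_near f x0 : continuity f -> 0 < f x0 ->
  exists d, 0 < d /\ forall x, Rabs (x - x0) < d -> 0 < f x.
Proof. intros Hc Hp. destruct (Hc x0 (f x0) Hp) as [d [Hd H]].
 exists d; split; auto. intros x Hx. destruct (Req_dec x x0) as [->|Hne]; auto.
 specialize (H x). simpl in H. unfold R_dist in H.
 assert (Rabs (f x - f x0) < f x0) by (apply H; split; [split; [exact I| auto] | auto]).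
 apply Rabs_def2 in H0. lra. Qed.

Lemma sq_P q m : 0 <= q <= 1 ->
  INR (S m) * q^m <= geo (q^2) (S m) /\ INR (S (S m)) * q^(S m) <= geo (q^2) (S (S m)).
Proof. intro Hq. induction m as [|m [IH1 IH2]].
 - simpl. split. lra. nra.
 - split; auto. rewrite geo_SS.
   set (X := q ^ S (S m)).
   assert (E1: q^2 * q^m = X) by (unfold X; rewrite <- pow_add; f_equal; lia).
   assert (E2: (q^2)^(S (S m)) = X^2) by (unfold X; rewrite <- !pow_mult; f_equal; lia).
   rewrite E2. rewrite !S_INR in *.
   assert (q^2 * geo (q^2) (S m) >= q^2 * ((INR m + 1) * q^m)) by (apply Rle_ge, Rmult_le_compat_l; [nra| lra]).
   assert (q^2 * ((INR m + 1) * q^m) = (INR m + 1) * X) by (rewrite <- E1; ring).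
   replace (q ^ S (S (S m))) with (q * X) by (unfold X; simpl; ring).
   assert (0 <= X) by (apply pow_le; lra). assert (X <= 1) by (apply pow_le1; lra).
   nra.
Qed.

Lemma sq_Q q m : 0 < q < 1 -> INR (S (S m)) * q^(S m) < geo (q^2) (S (S m)).
Proof. intro Hq. rewrite geo_SS. destruct m as [|k].
 - simpl. nra.
 - destruct (sq_P q k ltac:(lra)) as [P1 _].
   set (X := q ^ S (S k)).
   assert (E1: q^2 * q^k = X) by (unfold X; rewrite <- pow_add; f_equal; lia).
   assert (E2: (q^2)^(S (S k)) = X^2) by (unfold X; rewrite <- !pow_mult; f_equal; lia).
   rewrite E2. rewrite !S_INR in *.
   assert (q^2 * geo (q^2) (S k) >= q^2 * ((INR k + 1) * q^k)) by (apply Rle_ge, Rmult_le_compat_l; [nra| lra]).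
   assert (q^2 * ((INR k + 1) * q^k) = (INR k + 1) * X) by (rewrite <- E1; ring).
   assert (0 < X) by (apply pow_lt; lra). assert (X < 1).
   { unfold X. simpl. pose proof (pow_le1 q k ltac:(lra)). pose proof (pow_le q k ltac:(lra)). nra. }
   nra.
Qed.

Lemma part2_ineq r n T : 0 < r < 1 -> (2 <= n)%nat -> (n + 1 <= 2 * T)%nat ->
  INR n * r ^ T < r * geo r n.
Proof. intros Hr Hn HT. set (q := sqrt r).
 assert (Hq0: 0 < q) by (apply sqrt_lt_R0; lra).
 assert (Hqr: q^2 = r) by (unfold q; simpl; rewrite Rmult_1_r; apply sqrt_sqrt; lra).
 assert (Hq1: q < 1). { destruct (Rlt_or_le q 1); auto. nra. }
 destruct n as [|[|k]]; try lia.
 pose proof (sq_Q q k ltac:(lra)) as HQ. rewrite Hqr in HQ.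
 destruct T as [|T]; [lia|].
 assert (r ^ T <= q ^ S k).
 { rewrite <- Hqr, <- pow_mult. apply pow_anti; [lra|lia]. }
 replace (r ^ S T) with (r * r ^ T) by reflexivity.
 assert (INR (S (S k)) * r^T < geo r (S (S k))).
 { pose proof (pos_INR (S (S k))). 
   assert (INR (S (S k)) * r^T <= INR (S (S k)) * q ^ S k) by (apply Rmult_le_compat_l; lra). lra. }
 replace (INR (S (S k)) * (r * r ^ T)) with (r * (INR (S (S k)) * r ^ T)) by ring.
 apply Rmult_lt_compat_l; lra.
Qed.

Lemma bernoulli y m : 0 <= y <= 1 -> 1 - INR m * (1 - y) <= y ^ m.
Proof. intro H. induction m. simpl; lra. rewrite S_INR. simpl.
 pose proof (pos_INR m). assert (INR m * y * (1-y) <= INR m * (1-y)).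
 { replace (INR m * y * (1-y)) with ((INR m * (1-y)) * y) by ring.
   rewrite <- (Rmult_1_r (INR m * (1-y))) at 2. apply Rmult_le_compat_l. apply Rmult_le_pos; lra. lra. }
 assert (y * (1 - INR m*(1-y)) <= y * y^m) by (apply Rmult_le_compat_l; lra). nra. Qed.

Lemma chord r m : 0 <= r <= 1 ->
  2 * geo r (S m) <= INR (S m) * (1 + r^m) /\ 2 * geo r (S (S m)) <= INR (S (S m)) * (1 + r^(S m)).
Proof. intro Hr. induction m as [|m [IH1 IH2]].
 - simpl. split; lra.
 - split; auto. rewrite geo_SS. rewrite !S_INR in *.
   pose proof (pow_le r m ltac:(lra)). pose proof (pow_le1 r (S m) Hr).
   assert (r * (2 * geo r (S m)) <= r * ((INR m + 1) * (1 + r ^ m))) by (apply Rmult_le_compat_l; lra).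
   assert (0 <= (INR m + 1) * (1 - r) * (1 - r^(S m))).
   { apply Rmult_le_pos. apply Rmult_le_pos. pose proof (pos_INR m); lra. lra. lra. }
   replace (r ^ S (S m)) with (r * r ^ S m) by reflexivity.
   replace (r ^ S m) with (r * r ^ m) in * by reflexivity.
   nra.
Qed.

Lemma rb_exists c n : (1 <= c)%nat -> (2*c+2 <= n)%nat ->
  exists rb, 1/2 <= rb < 1 /\ geo rb n < INR n * rb^c.
Proof. intros Hc Hn. set (C := INR c).
 assert (HC: 1 <= C) by (unfold C; apply (le_INR 1); lia).
 set (e := / ((C+1)^2)).
 assert (He: e * (C+1)^2 = 1) by (unfold e; field; lra).
 assert (He0: 0 < e) by (unfold e; apply Rinv_0_lt_compat; nra).
 assert (He1: e <= 1/4). { assert (4 <= (C+1)^2) by nra. nra. }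
 set (y := 1 - e). exists y. split. unfold y; lra.
 set (u := y ^ c).
 assert (Hu1: u <= 1) by (apply pow_le1; unfold y; lra).
 assert (Hu0: 0 < u) by (apply pow_lt; unfold y; lra).
 assert (Hb: 1 - C * e <= u) by (pose proof (bernoulli y c ltac:(unfold y; lra)); unfold u, C; replace e with (1 - y) by (unfold y; ring); lra).
 assert (Hb2: 1 - 2 * C * e <= u^2).
 { assert (u^2 = y^(2*c)) by (unfold u; rewrite <- pow_mult; f_equal; lia).
   rewrite H. pose proof (bernoulli y (2*c) ltac:(unfold y; lra)). rewrite mult_INR in H0. replace (INR 2) with 2 in H0 by (simpl; lra).
   fold C in H0. replace (1 - y) with e in H0 by (unfold y; ring). lra. }
 destruct n as [|m]; [lia|].
 destruct (chord y m ltac:(unfold y; lra)) as [Hch _].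
 assert (y^m <= u^2 * y).
 { assert (u^2*y = y^(S (2*c))) by (unfold u; rewrite <- pow_mult; replace (c*2)%nat with (2*c)%nat by lia; change (y ^ S (2*c)) with (y * y^(2*c)); ring).
   rewrite H. apply pow_anti; [unfold y; lra|lia]. }
 assert (Hkey: 1 + u^2 * y < 2 * u).
 { replace y with (1 - e) by reflexivity.
   assert (0 <= 1 - u <= C * e) by lra.
   assert ((1-u)^2 <= (C*e)^2) by (apply pow_incr; lra).
   assert (u^2 * e >= (1 - 2*C*e) * e) by (apply Rle_ge, Rmult_le_compat_r; lra).
   assert (C^2 * e^2 < (1 - 2*C*e) * e).
   { assert (e * (C^2 + 2*C) < 1) by nra. nra. }
   nra. }
 pose proof (pos_INR (S m)).
 assert (INR (S m) > 0) by (apply lt_0_INR; lia).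
 assert (INR (S m) * (1 + y^m) <= INR (S m) * (1 + u^2*y)) by (apply Rmult_le_compat_l; lra).
 assert (INR (S m) * (1 + u^2*y) < INR (S m) * (2*u)) by (apply Rmult_lt_compat_l; lra).
 fold u. lra.
Qed.

Lemma geo_one n : geo 1 n = INR n.
Proof. apply Rle_antisym. apply geo_le_n; lra. pose proof (geo_ge_pow 1 n ltac:(lra)). rewrite pow1 in H. lra. Qed.

Lemma lam_eq n k l r : 0 < l -> 0 < r -> mu_of n l = l * r ^ (S n) ->
  lam_nj n (S k) (Some l) = l * r ^ k.
Proof. intros Hl Hr Hm. unfold lam_nj. cbv beta iota zeta. rewrite Hm.
 set (e := (INR (S k) - 1) / INR (S n)).
 assert (0 < r ^ S n) by (apply pow_lt; lra).
 rewrite <- Rpower_mult_distr by lra.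
 rewrite <- (Rpower_pow (S n) r) by lra. rewrite Rpower_mult.
 assert (INR (S n) > 0) by (apply lt_0_INR; lia).
 replace (INR (S n) * e) with (INR k) by (unfold e; rewrite (S_INR k); field; lra).
 rewrite Rpower_pow by lra.
 replace (Rpower l (1 - e) * (Rpower l e * r ^ k)) with ((Rpower l (1 - e) * Rpower l e) * r ^ k) by ring.
 rewrite <- Rpower_plus. replace (1 - e + e) with 1 by ring. rewrite Rpower_1; auto.
Qed.

Lemma mu_spec n l : (2 <= n)%nat -> 1 / INR n < l ->
  exists r, 0 < r < 1 /\ l * r * geo r n = 1 /\ mu_of n l = l * r ^ (S n).
Proof. intros Hn Hl.
 assert (HN: 2 <= INR n) by (apply (le_INR 2); lia).
 assert (Hl0: 0 < l). { assert (0 < 1 / INR n) by (apply Rdiv_lt_0_compat; lra). lra. }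
 assert (Hil: / l < INR n).
 { assert (1 < l * INR n). { apply (Rmult_lt_compat_r (INR n)) in Hl; [|lra].
     replace (1 / INR n * INR n) with 1 in Hl by (field; lra). lra. }
   apply (Rmult_lt_reg_l l); auto. rewrite Rinv_r; lra. }
 assert (Hil0: 0 < / l) by (apply Rinv_0_lt_compat; lra).
 assert (Hex: exists m, 0 < m /\ m <= 1 / INR n /\ fn n m = fn n l).
 { set (f := fun r => r * geo r n - / l).
   assert (Hc: continuity f).
   { unfold f. apply (continuity_minus (fun r => r * geo r n) (fun _ => / l)).
     apply (continuity_mult (fun r => r) (fun r => geo r n)).
     apply derivable_continuous, derivable_id. apply geo_cont.
     apply continuity_const. intros x y; reflexivity. }
   destruct (IVT f 0 1 Hc ltac:(lra)) as [z [Hz Hfz]].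
   { unfold f. lra. }
   { unfold f. rewrite geo_one. lra. }
   unfold f in Hfz.
   assert (Hz0: z <> 0). { intro. subst z. lra. }
   assert (Hz1: z <> 1). { intro. subst z. rewrite geo_one in Hfz. lra. }
   assert (Hzr: 0 < z < 1) by lra.
   assert (HS: l * z * geo z n = 1). { replace (l * z * geo z n) with (l * (z * geo z n)) by ring.
     replace (z * geo z n) with (/ l) by lra. field. lra. }
   pose proof (geo_tel z n) as Ht.
   assert (Hzn: 0 < z ^ n) by (apply pow_lt; lra).
   exists (l * z ^ S n). split; [|split].
   - apply Rmult_lt_0_compat; auto. apply pow_lt; lra.
   - pose proof (geo_ge_pow z n ltac:(lra)).
     assert (INR n * (l * z ^ S n) <= 1).
     { rewrite <- HS. simpl. replace (INR n * (l * (z * z ^ n))) with ((l*z) * (INR n * z^n)) by ring.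
       replace (l * z * geo z n) with ((l*z) * geo z n) by ring.
       apply Rmult_le_compat_l; nra. }
     apply (Rmult_le_reg_l (INR n)); [lra|]. replace (INR n * (1 / INR n)) with 1 by (field; lra). lra.
   - assert (E: 1 + l * z ^ S n = z * (1 + l)).
     { simpl. assert (l * z * ((1 - z) * geo z n) = l * z * (1 - z ^ n)) by (rewrite Ht; reflexivity).
       replace (l * z * ((1 - z) * geo z n)) with ((1 - z) * (l * z * geo z n)) in H by ring.
       rewrite HS in H. nra. }
     unfold fn. rewrite E. rewrite Rpow_mult_distr. field. split; [lra|]. apply pow_nonzero. lra. }
 pose proof (epsilon_spec (inhabits 0) _ Hex) as [Hm0 [Hm1 Hm2]].
 fold (mu_of n l) in Hm0, Hm1, Hm2.
 set (m := mu_of n l) in *.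
 set (r := (1 + m) / (1 + l)).
 assert (Hr: 0 < r < 1). { unfold r. split. apply Rdiv_lt_0_compat; lra.
   apply (Rmult_lt_reg_r (1+l)); [lra|]. field_simplify; lra. }
 assert (HmR: m = l * r ^ S n).
 { unfold fn in Hm2. set (A := (1 + m) ^ S n) in *. set (B := (1 + l) ^ S n) in *.
   assert (HB: 0 < B) by (unfold B; apply pow_lt; lra).
   assert (HA: A = B * m / l). { replace A with (A / m * m) by (field; lra). rewrite Hm2. field. lra. }
   unfold r. unfold Rdiv. rewrite Rpow_mult_distr, pow_inv. fold A B. rewrite HA. field. lra. }
 exists r. split; auto. split; auto.
 assert (E: 1 + m = r * (1 + l)) by (unfold r; field; lra).
 pose proof (geo_tel r n) as Ht.
 apply (Rmult_eq_reg_l (1 - r)); [|lra].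
 replace ((1 - r) * (l * r * geo r n)) with (l * r * ((1 - r) * geo r n)) by ring.
 rewrite Ht. rewrite HmR in E. simpl in E. nra.
Qed.

Definition Af n T r := INR n * r ^ T - r * geo r n.
Definition Bf n T r := r * geo r n - INR n * r ^ S T.

Lemma cont_A n T : continuity (Af n T).
Proof. unfold Af. apply (continuity_minus (fun r => INR n * r ^ T) (fun r => r * geo r n)).
 apply (continuity_mult (fun _ => INR n) (fun r => r ^ T)). apply continuity_const; intros x y; reflexivity. apply cont_pow.
 apply (continuity_mult (fun r => r) (fun r => geo r n)). apply derivable_continuous, derivable_id. apply geo_cont. Qed.

Lemma cont_B n T : continuity (Bf n T).
Proof. unfold Bf. apply (continuity_minus (fun r => r * geo r n) (fun r => INR n * r ^ S T)).
 apply (continuity_mult (fun r => r) (fun r => geo r n)). apply derivable_continuous, derivable_id. apply geo_cont.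
 apply (continuity_mult (fun _ => INR n) (fun r => r ^ S T)). apply continuity_const; intros x y; reflexivity. apply cont_pow. Qed.

Lemma point_exists n T : (2 <= n)%nat -> (1 <= T)%nat -> (2 * T <= n)%nat ->
  exists r0, 1 / INR n <= r0 < 1 /\ 0 < Af n T r0 /\ 0 < Bf n T r0.
Proof. intros Hn HT1 HT2.
 assert (HN: 2 <= INR n) by (apply (le_INR 2); lia).
 set (s := 1 / INR n).
 assert (Hs: 0 < s <= 1/2). { unfold s. split. apply Rdiv_lt_0_compat; lra.
   apply Rmult_le_reg_r with (INR n). lra. replace (1 / INR n * INR n) with 1 by (field; lra). lra. }
 assert (Hsn: INR n * s = 1) by (unfold s; field; lra).
 assert (Hg1: 1 + s <= geo s n) by (apply geo_ge_1r; [lra|lia]).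
 destruct (Nat.eq_dec T 1) as [->|HT].
 - exists s. split. lra. unfold Af, Bf. simpl pow.
   pose proof (geo_lt_n s n ltac:(lra) Hn). split; nra.
 - destruct T as [|c]; [lia|].
   destruct (rb_exists c n ltac:(lia) ltac:(lia)) as [rb [Hrb Hh]].
   assert (Hn4: 4 <= INR n) by (replace 4 with (INR 4) by (simpl; lra); apply le_INR; lia).
   assert (Hs4: s <= 1/4). { unfold s. apply Rmult_le_reg_r with (INR n). lra. replace (1 / INR n * INR n) with 1 by (field; lra). lra. }
   set (h := fun r => geo r n - INR n * r ^ c).
   assert (Hhs: 0 < h s). { unfold h. assert (s ^ c <= s ^ 1) by (apply pow_anti; [lra|lia]).
     simpl in H. assert (INR n * s ^ c <= INR n * (s * 1)) by (apply Rmult_le_compat_l; lra). lra. }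
   set (eta := Rmin ((1 - rb)/2) (- h rb / 2)).
   assert (Heta: 0 < eta /\ eta < 1 - rb /\ eta < - h rb).
   { unfold eta, h. unfold Rmin. destruct (Rle_dec _ _); lra. }
   set (f := fun r => - (h r + eta)).
   assert (Hc: continuity f).
   { unfold f, h. apply continuity_opp. apply (continuity_plus (fun r => geo r n - INR n * r ^ c) (fun _ => eta)).
     apply (continuity_minus (fun r => geo r n) (fun r => INR n * r ^ c)). apply geo_cont.
     apply (continuity_mult (fun _ => INR n) (fun r => r ^ c)). apply continuity_const; intros x y; reflexivity. apply cont_pow.
     apply continuity_const; intros x y; reflexivity. }
   destruct (IVT f s rb Hc ltac:(lra)) as [r0 [Hr0 Hf0]].
   { unfold f. lra. } { unfold f. lra. }
   unfold f, h in Hf0.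
   exists r0. split. lra. unfold Af, Bf.
   assert (Hg: 1 <= geo r0 n) by (apply geo_ge1; lia || lra).
   replace (r0 ^ S c) with (r0 * r0 ^ c) by reflexivity.
   replace (r0 ^ S (S c)) with (r0 * (r0 * r0 ^ c)) by reflexivity.
   assert (E: INR n * r0 ^ c = geo r0 n + eta) by lra.
   split.
   + replace (INR n * (r0 * r0 ^ c) - r0 * geo r0 n) with (r0 * (INR n * r0 ^ c - geo r0 n)) by ring.
     rewrite E. apply Rmult_lt_0_compat; lra.
   + replace (r0 * geo r0 n - INR n * (r0 * (r0 * r0 ^ c))) with (r0 * (geo r0 n - r0 * (INR n * r0 ^ c))) by ring.
     rewrite E. apply Rmult_lt_0_compat. lra. nra.
Qed.

Theorem theorem2p7 (n : nat) (Hn : (2 <= n)%nat) :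
  (forall T : nat, (1 <= T)%nat -> (T <= Nat.div n 2)%nat ->
     exists a b : R, 1 / INR n <= a /\ a < b /\ b <= INR n /\
       forall l : R, a < l < b ->
         lamhat_nj n T (Some l) > 1 / INR n /\
         lam_nj n (T + 2) (Some l) < 1 / INR n)
  /\
  (forall T : nat, (Nat.div n 2 < T)%nat -> (T <= n + 1)%nat ->
     forall x : option R,
       match x with Some l => 1 / INR n < l | None => True end ->
       lamhat_nj n T x = lam_nj n (T + 1) x /\
       lam_nj n (T + 1) x < 1 / INR n).
Proof.
 pose proof (Nat.div_mod n 2 ltac:(lia)) as Hdm.
 pose proof (Nat.mod_upper_bound n 2 ltac:(lia)) as Hmu.
 assert (HN: 2 <= INR n) by (apply (le_INR 2); lia).
 assert (Hinv: 0 < 1 / INR n) by (apply Rdiv_lt_0_compat; lra).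
 split.
 - intros T HT1 HT2.
   destruct (point_exists n T Hn HT1 ltac:(lia)) as [r0 [Hr0 [HA HB]]].
   destruct (pos_near _ r0 (cont_A n T) HA) as [d1 [Hd1 HA']].
   destruct (pos_near _ r0 (cont_B n T) HB) as [d2 [Hd2 HB']].
   set (d := Rmin d1 d2).
   assert (Hd: 0 < d /\ d <= d1 /\ d <= d2) by (unfold d, Rmin; destruct (Rle_dec _ _); lra).
   set (r2 := Rmin (r0 + d/2) ((1 + r0)/2)).
   assert (Hr2: r0 < r2 < 1 /\ r2 <= r0 + d/2) by (unfold r2, Rmin; destruct (Rle_dec _ _); lra).
   assert (Hr00: 0 < r0) by lra.
   set (P1 := r0 * geo r0 n). set (P2 := r2 * geo r2 n).
   assert (HP1: 1 / INR n <= P1).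
   { unfold P1. assert (1 <= geo r0 n) by (apply geo_ge1; [lra|lia]). nra. }
   assert (HP12: P1 < P2).
   { unfold P1, P2. assert (geo r0 n <= geo r2 n) by (apply geo_mono_r; lra).
     assert (1 <= geo r0 n) by (apply geo_ge1; [lra|lia]). nra. }
   assert (HP2: P2 <= INR n).
   { unfold P2. assert (geo r2 n <= INR n) by (apply geo_le_n; lra).
     assert (0 <= geo r2 n) by (apply geo_nonneg; lra). nra. }
   exists (/ P2), (/ P1). split; [|split; [|split]].
   + replace (1 / INR n) with (/ INR n) by (field; lra). apply Rinv_le_contravar; lra.
   + apply Rinv_lt_contravar; [nra | lra].
   + replace (INR n) with (/ (1 / INR n)) by (field; lra). apply Rinv_le_contravar; lra.
   + intros l [Hla Hlb].
     assert (Hl: 1 / INR n < l).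
     { assert (/ INR n <= / P2) by (apply Rinv_le_contravar; lra).
       replace (1 / INR n) with (/ INR n) by (field; lra). lra. }
     destruct (mu_spec n l Hn Hl) as [r [Hr [HS Hm]]].
     assert (Hl0: 0 < l) by lra.
     assert (HrS: r * geo r n = / l) by (apply (Rmult_eq_reg_l l); [rewrite Rinv_r; lra | lra]).
     assert (Hrr: r0 < r < r2).
     { split.
       - destruct (Rlt_or_le r0 r) as [|Hle]; auto. exfalso.
         assert (geo r n <= geo r0 n) by (apply geo_mono_r; lra).
         assert (0 <= geo r n) by (apply geo_nonneg; lra).
         assert (/ l <= P1) by (unfold P1; rewrite <- HrS; nra).
         assert (/ P1 <= / / l) by (apply Rinv_le_contravar; [apply Rinv_0_lt_compat|]; lra).
         rewrite Rinv_inv in H2. lra.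
       - destruct (Rlt_or_le r r2) as [|Hle]; auto. exfalso.
         assert (geo r2 n <= geo r n) by (apply geo_mono_r; lra).
         assert (0 <= geo r2 n) by (apply geo_nonneg; lra).
         assert (P2 <= / l) by (unfold P2; rewrite <- HrS; nra).
         assert (/ / l <= / P2) by (apply Rinv_le_contravar; nra).
         rewrite Rinv_inv in H2. lra. }
     assert (Habs: Rabs (r - r0) < d1 /\ Rabs (r - r0) < d2).
     { rewrite Rabs_right by lra. lra. }
     pose proof (HA' r (proj1 Habs)) as HAr. pose proof (HB' r (proj2 Habs)) as HBr.
     unfold Af, Bf in HAr, HBr.
     unfold lamhat_nj. replace (T + 2)%nat with (S (S T)) by lia.
     rewrite !(lam_eq n _ l r) by (assumption || lra).
     replace (1 / INR n) with (l * r * geo r n / INR n) by (rewrite HS; reflexivity).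
     split.
     * apply Rlt_gt. apply (Rmult_lt_reg_r (INR n)); [lra|].
       replace (l * r * geo r n / INR n * INR n) with (l * (r * geo r n)) by (field; lra).
       replace (l * r ^ T * INR n) with (l * (INR n * r ^ T)) by ring.
       apply Rmult_lt_compat_l; lra.
     * apply (Rmult_lt_reg_r (INR n)); [lra|].
       replace (l * r * geo r n / INR n * INR n) with (l * (r * geo r n)) by (field; lra).
       replace (l * r ^ S T * INR n) with (l * (INR n * r ^ S T)) by ring.
       apply Rmult_lt_compat_l; lra.
 - intros T HT1 HT2 x Hx.
   assert (HT3: (n + 1 <= 2 * T)%nat) by lia.
   assert (HT4: (2 <= T)%nat) by lia.
   unfold lamhat_nj. rewrite Nat.add_1_r. split; [reflexivity|].
   destruct x as [l|].
   + destruct (mu_spec n l Hn Hx) as [r [Hr [HS Hm]]].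
     assert (Hl0: 0 < l) by lra.
     rewrite (lam_eq n T l r) by (assumption || lra).
     pose proof (part2_ineq r n T Hr Hn HT3) as Hp.
     replace (1 / INR n) with (l * r * geo r n / INR n) by (rewrite HS; reflexivity).
     apply (Rmult_lt_reg_r (INR n)); [lra|].
     replace (l * r * geo r n / INR n * INR n) with (l * (r * geo r n)) by (field; lra).
     replace (l * r ^ T * INR n) with (l * (INR n * r ^ T)) by ring.
     apply Rmult_lt_compat_l; lra.
   + destruct T as [|[|T']]; try lia. simpl. exact Hinv.
Qed.
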